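(* Assume there are $N$ pursuers with positions $\mathbf{x}_{P_i}$ and maximal speeds $u_i$, each faster than the evader ($\nu_i:=\nu_E/u_i<1$), and $\mathbf{x}_E(t_0)\neq\mathbf{x}_{P_i}(t_0)$ for all $i$. Let $\mathcal I=\bigcap_{i}\mathcal A_i(t_0)$. Suppose each pursuer $i$ independently uses (after normalizing its speed) the law $\mathbf{v}_{P_i}=u_i\,\mathbf{z}_{P_i}/\|\mathbf{z}_{P_i}\|$, $\mathbf{z}_{P_i}=(R_{\mathcal C_i}-R_{\mathcal A_i})\mathbf{r}_i/\|\mathbf{r}_i\|+\nu_i\mathbf{y}_i$, with parameter $\delta>0$. Then for every admissible evader control, capture by some pursuer occurs in finite time at a point of $\bigcap_i\mathcal C_i$; consequently, for a closed target set $\mathcal T$ with $\mathcal I\cap\mathcal T=\emptyset$, for all sufficiently small $\delta>0$ the pursuers win the Generalized Target Guarding game.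
   Context: Setting: planar simple motion. The evader has position $\mathbf{x}_E$ with $\dot{\mathbf{x}}_E=\mathbf{v}_E$, $\|\mathbf{v}_E\|\le\nu_E$; pursuer $i$ has position $\mathbf{x}_{P_i}$ with $\dot{\mathbf{x}}_{P_i}=\mathbf{v}_{P_i}$, $\|\mathbf{v}_{P_i}\|\le u_i$. Capture occurs at the first time some $\mathbf{x}_{P_i}=\mathbf{x}_E$. For each $i$, with $\nu_i=\nu_E/u_i<1$, set $\alpha_i=1/(1-\nu_i^2)$, $\gamma_i=\nu_i\alpha_i$, $\beta_i=\nu_i^2\alpha_i$, $\mathbf{r}_i=\mathbf{x}_E-\mathbf{x}_{P_i}$; the Apollonius disc $\mathcal A_i(t)$ is the closed disc with center $\mathbf{x}_{\mathcal A_i}(t)=\alpha_i\mathbf{x}_E(t)-\beta_i\mathbf{x}_{P_i}(t)$ and radius $R_{\mathcal A_i}(t)=\gamma_i\|\mathbf{r}_i(t)\|$; $\mathcal C_i$ is the closed disc with center $\mathbf{x}_{\mathcal C_i}=\mathbf{x}_{\mathcal A_i}(t_0)$ and radius $R_{\mathcal C_i}=R_{\mathcal A_i}(t_0)+\delta$; $\mathbf{y}_i=\mathbf{x}_{\mathcal A_i}-\mathbf{x}_{\mathcal C_i}$. Generalized Target Guarding: the evader wins if it reaches a point of $\mathcal T$ no later than capture; the pursuers win if capture occurs strictly before. *)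

(* Defs.v *)
From Stdlib Require Import Reals.
Open Scope R_scope.

Definition Pt : Type := (R * R)%type.

Definition padd (p q : Pt) : Pt := (fst p + fst q, snd p + snd q).
Definition psub (p q : Pt) : Pt := (fst p - fst q, snd p - snd q).
Definition pscal (a : R) (p : Pt) : Pt := (a * fst p, a * snd p).
Definition pnorm (p : Pt) : R := sqrt (fst p ^ 2 + snd p ^ 2).
Definition pdist (p q : Pt) : R := pnorm (psub p q).

Definition in_disc (c : Pt) (rad : R) (p : Pt) : Prop := pdist p c <= rad.

Definition closed_plane (T : Pt -> Prop) : Prop :=
  forall p, (forall eps, 0 < eps -> exists q, T q /\ pdist p q < eps) -> T p.

Definition alphaA (nu : R) : R := 1 / (1 - nu ^ 2).
Definition gammaA (nu : R) : R := nu * alphaA nu.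
Definition betaA  (nu : R) : R := nu ^ 2 * alphaA nu.

Definition apo_center (nu : R) (xE xP : Pt) : Pt :=
  psub (pscal (alphaA nu) xE) (pscal (betaA nu) xP).
Definition apo_radius (nu : R) (xE xP : Pt) : R :=
  gammaA nu * pnorm (psub xE xP).

Definition pursuer_law (nu ui delta : R) (xE0 xP0 xE xP : Pt) : Pt :=
  let r := psub xE xP in
  let RA := apo_radius nu xE xP in
  let RC := apo_radius nu xE0 xP0 + delta in
  let y := psub (apo_center nu xE xP) (apo_center nu xE0 xP0) in
  let z := padd (pscal ((RC - RA) / pnorm r) r) (pscal nu y) in
  pscal (ui / pnorm z) z.

Definition no_capture_upto (N : nat) (xE : R -> Pt) (xP : nat -> R -> Pt)
    (t0 t : R) : Prop :=
  forall s, t0 <= s <= t -> forall j, (j < N)%nat -> xP j s <> xE s.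

Definition first_capture (N : nat) (xE : R -> Pt) (xP : nat -> R -> Pt)
    (t0 Tc : R) : Prop :=
  t0 <= Tc /\
  (exists i, (i < N)%nat /\ xP i Tc = xE Tc) /\
  (forall s, t0 <= s < Tc -> forall j, (j < N)%nat -> xP j s <> xE s).

(* admissible evader trajectories: speed at most nuE, i.e. nuE-Lipschitz
   on [t0, +oo) (the trajectories of measurable controls with ||v_E|| <= nuE) *)
Definition evader_admissible (nuE t0 : R) (xE : R -> Pt) : Prop :=
  forall s t, t0 <= s -> t0 <= t -> pdist (xE t) (xE s) <= nuE * Rabs (t - s).

Definition pursuers_follow (N : nat) (u : nat -> R) (nuE delta t0 : R)
    (xE : R -> Pt) (xP : nat -> R -> Pt) : Prop :=
  forall i, (i < N)%nat ->
    (forall t, t0 <= t -> forall eps, 0 < eps -> exists eta, 0 < eta /\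
        forall s, t0 <= s -> Rabs (s - t) < eta -> pdist (xP i s) (xP i t) < eps) /\
    (forall t, t0 < t -> no_capture_upto N xE xP t0 t ->
        let v := pursuer_law (nuE / u i) (u i) delta (xE t0) (xP i t0)
                             (xE t) (xP i t) in
        derivable_pt_lim (fun s => fst (xP i s)) t (fst v) /\
        derivable_pt_lim (fun s => snd (xP i s)) t (snd v)).

Definition in_all_C (N : nat) (u : nat -> R) (nuE delta : R) (xE0 : Pt)
    (xP0 : nat -> Pt) (p : Pt) : Prop :=
  forall i, (i < N)%nat ->
    in_disc (apo_center (nuE / u i) xE0 (xP0 i))
            (apo_radius (nuE / u i) xE0 (xP0 i) + delta) p.

Definition in_I (N : nat) (u : nat -> R) (nuE : R) (xE0 : Pt)
    (xP0 : nat -> Pt) (p : Pt) : Prop :=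
  forall i, (i < N)%nat ->
    in_disc (apo_center (nuE / u i) xE0 (xP0 i))
            (apo_radius (nuE / u i) xE0 (xP0 i)) p.

Definition pursuers_win (N : nat) (Tg : Pt -> Prop) (xE : R -> Pt)
    (xP : nat -> R -> Pt) (t0 : R) : Prop :=
  exists Tc, first_capture N xE xP t0 Tc /\
    forall s, t0 <= s <= Tc -> ~ Tg (xE s).

(* Main.v *)
Require Import Defs.
From Stdlib Require Import Reals Lra Psatz Classical ClassicalEpsilon.
From Coquelicot Require Compactness.
Open Scope R_scope.

Definition dot (p q : Pt) : R := fst p * fst q + snd p * snd q.

Lemma dot_self_nonneg p : 0 <= dot p p.
Proof. unfold dot; nra. Qed.

Lemma pnorm_nonneg p : 0 <= pnorm p.
Proof. unfold pnorm; apply sqrt_pos. Qed.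

Lemma pnorm_sq p : pnorm p ^ 2 = dot p p.
Proof. unfold pnorm, dot. rewrite <- Rsqr_pow2. rewrite Rsqr_sqrt; [ring|nra]. Qed.

Lemma pnorm_sq' p : pnorm p * pnorm p = dot p p.
Proof. rewrite <- pnorm_sq; ring. Qed.

Lemma le_of_sq0 a b : 0 <= b -> a ^ 2 <= b ^ 2 -> a <= b.
Proof. intros. destruct (Rle_dec a b); auto. nra. Qed.

Lemma cs p q : dot p q <= pnorm p * pnorm q.
Proof.
  assert (H: (dot p q)^2 <= (pnorm p * pnorm q)^2).
  { rewrite Rpow_mult_distr, !pnorm_sq. unfold dot.
    pose proof (pow2_ge_0 (fst p * snd q - snd p * fst q)). nra. }
  pose proof (pnorm_nonneg p); pose proof (pnorm_nonneg q).
  apply le_of_sq0; auto. apply Rmult_le_pos; auto.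
Qed.

Lemma cs_abs p q : Rabs (dot p q) <= pnorm p * pnorm q.
Proof.
  apply Rabs_le; split.
  - assert (dot (pscal (-1) p) q <= pnorm (pscal (-1) p) * pnorm q) by apply cs.
    assert (pnorm (pscal (-1) p) = pnorm p).
    { unfold pnorm, pscal; simpl. f_equal; ring. }
    unfold dot, pscal in *; simpl in *. nra.
  - apply cs.
Qed.

Lemma le_of_sq a b : 0 <= b -> a ^ 2 <= b ^ 2 -> a <= b.
Proof. apply le_of_sq0. Qed.

Lemma pnorm_le_of_sq p b : 0 <= b -> dot p p <= b ^ 2 -> pnorm p <= b.
Proof. intros. apply le_of_sq; auto. rewrite pnorm_sq; auto. Qed.

Lemma ptri p q : pnorm (padd p q) <= pnorm p + pnorm q.
Proof.
  apply pnorm_le_of_sq. pose proof (pnorm_nonneg p); pose proof (pnorm_nonneg q); lra.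
  pose proof (cs p q). pose proof (pnorm_sq p); pose proof (pnorm_sq q).
  unfold dot, padd in *; simpl in *. nra.
Qed.

Lemma pnorm_scal a p : pnorm (pscal a p) = Rabs a * pnorm p.
Proof.
  unfold pnorm, pscal; simpl.
  rewrite <- sqrt_Rsqr_abs. rewrite <- sqrt_mult_alt.
  f_equal. unfold Rsqr; ring. apply Rle_0_sqr.
Qed.

Lemma pnorm_coord_le p : pnorm p <= Rabs (fst p) + Rabs (snd p).
Proof.
  apply pnorm_le_of_sq. pose proof (Rabs_pos (fst p)); pose proof (Rabs_pos (snd p)); lra.
  unfold dot. pose proof (Rabs_pos (fst p)); pose proof (Rabs_pos (snd p)).
  rewrite <- (Rsqr_abs (fst p)) at 1 2 ||idtac.
  assert (fst p * fst p = Rabs (fst p) * Rabs (fst p)) by (rewrite <- Rabs_mult; rewrite Rabs_pos_eq; nra).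
  assert (snd p * snd p = Rabs (snd p) * Rabs (snd p)) by (rewrite <- Rabs_mult; rewrite Rabs_pos_eq; nra).
  nra.
Qed.

Lemma pnorm_zero p : pnorm p = 0 -> p = (0,0).
Proof.
  intro H. pose proof (pnorm_sq p). rewrite H in H0. unfold dot in H0.
  destruct p as [a b]; simpl in *. assert (a = 0) by nra. assert (b = 0) by nra. subst; auto.
Qed.

Lemma pdist_eq0 a b : pdist a b = 0 -> a = b.
Proof.
  unfold pdist. intro H. apply pnorm_zero in H. destruct a, b; unfold psub in H; simpl in H.
  injection H; intros; f_equal; lra.
Qed.

Lemma pdist_pos a b : a <> b -> 0 < pdist a b.
Proof.
  intro H. pose proof (pnorm_nonneg (psub a b)). unfold pdist.
  destruct (Req_dec (pnorm (psub a b)) 0) as [E|E]; [|lra].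
  exfalso; apply H, pdist_eq0; auto.
Qed.

Lemma pdist_sym a b : pdist a b = pdist b a.
Proof. unfold pdist, pnorm, psub; simpl. f_equal; ring. Qed.

Lemma pdist_tri a b c : pdist a c <= pdist a b + pdist b c.
Proof.
  unfold pdist. replace (psub a c) with (padd (psub a b) (psub b c)).
  apply ptri. unfold padd, psub; simpl; f_equal; ring.
Qed.

Lemma pnorm_ext p q : fst p = fst q -> snd p = snd q -> pnorm p = pnorm q.
Proof. intros; unfold pnorm; rewrite H, H0; auto. Qed.

Lemma pnorm_pos_sqr_lt p : 0 < dot p p -> 0 < pnorm p.
Proof. intro. unfold pnorm. apply sqrt_lt_R0. unfold dot in H; lra. Qed.

Lemma sqrt_up rho X : 0 < rho -> 0 <= rho^2 + X -> sqrt (rho^2 + X) <= rho + X / (2*rho).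
Proof.
  intros H1 H2.
  destruct (Rle_lt_dec 0 (rho + X/(2*rho))) as [H3|H3].
  - apply le_of_sq; auto. rewrite <- Rsqr_pow2, Rsqr_sqrt by auto.
    assert (rho + X/(2*rho) = (2*rho^2 + X)/(2*rho)) by (field; lra).
    rewrite H. unfold Rdiv. rewrite Rpow_mult_distr. rewrite pow_inv.
    apply (Rmult_le_reg_r ((2*rho)^2)). nra.
    rewrite Rmult_assoc, Rinv_l by nra. nra.
  - exfalso. assert (X < -2*rho^2).
    { assert (X/(2*rho) < - rho) by lra.
      apply (Rmult_lt_compat_r (2*rho)) in H; [|lra].
      unfold Rdiv in H. rewrite Rmult_assoc, Rinv_l in H by lra. lra. }
    nra.
Qed.

Lemma pnorm_dot p : pnorm p = sqrt (dot p p).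
Proof. unfold pnorm, dot. f_equal; ring. Qed.

Lemma dot_padd_l a b c : dot (padd a b) c = dot a c + dot b c.
Proof. unfold dot, padd; simpl; ring. Qed.
Lemma dot_padd_r a b c : dot c (padd a b) = dot c a + dot c b.
Proof. unfold dot, padd; simpl; ring. Qed.
Lemma dot_psub_l a b c : dot (psub a b) c = dot a c - dot b c.
Proof. unfold dot, psub; simpl; ring. Qed.
Lemma dot_psub_r a b c : dot c (psub a b) = dot c a - dot c b.
Proof. unfold dot, psub; simpl; ring. Qed.
Lemma dot_pscal_l k a c : dot (pscal k a) c = k * dot a c.
Proof. unfold dot, pscal; simpl; ring. Qed.
Lemma dot_pscal_r k a c : dot c (pscal k a) = k * dot c a.
Proof. unfold dot, pscal; simpl; ring. Qed.
Lemma dot_comm a b : dot a b = dot b a.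
Proof. unfold dot; ring. Qed.

Lemma al_pos nu : 0 < nu < 1 -> 0 < alphaA nu.
Proof. intros. unfold alphaA. apply Rdiv_lt_0_compat; nra. Qed.
Lemma al_rel nu : 0 < nu < 1 -> alphaA nu * (1 - nu^2) = 1.
Proof. intros. unfold alphaA. field. nra. Qed.



Lemma pnorm_padd_up r dr : 0 < pnorm r ->
  pnorm (padd r dr) <= pnorm r + (2 * dot r dr + dot dr dr) / (2 * pnorm r).
Proof.
  intro H.
  assert (E: dot (padd r dr) (padd r dr) = pnorm r ^ 2 + (2 * dot r dr + dot dr dr)).
  { rewrite pnorm_sq. unfold dot, padd; simpl; ring. }
  rewrite pnorm_dot at 1. rewrite E.
  apply sqrt_up; auto. rewrite <- E. apply dot_self_nonneg.
Qed.

Definition RCv nu delta (E0 P0 : Pt) := apo_radius nu E0 P0 + delta.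
Definition yv nu (E0 P0 E P : Pt) := psub (apo_center nu E P) (apo_center nu E0 P0).
Definition dv nu delta (E0 P0 E P : Pt) := RCv nu delta E0 P0 - apo_radius nu E P.
Definition Fv nu delta (E0 P0 E P : Pt) := pnorm (yv nu E0 P0 E P) ^ 2 - dv nu delta E0 P0 E P ^ 2.

Lemma pt_eq (a b : Pt) : fst a = fst b -> snd a = snd b -> a = b.
Proof. destruct a, b; simpl; intros; subst; auto. Qed.

Lemma W_z_identity nu y r k :
  dot (padd y (pscal (nu*k) r)) (padd y (pscal (nu*k) r))
  - dot (padd (pscal k r) (pscal nu y)) (padd (pscal k r) (pscal nu y))
  = (1 - nu^2) * (dot y y - k^2 * dot r r).
Proof. unfold dot, padd, pscal; simpl; ring. Qed.

Lemma key_incr nu u delta E0 P0 E P dE e h :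
  0 < nu < 1 -> 0 < u -> 0 < delta -> 0 < h ->
  0 < pnorm (psub E P) ->
  Fv nu delta E0 P0 E P < 0 ->
  pnorm dE <= nu * u * h ->
  let v := pursuer_law nu u delta E0 P0 E P in
  let dP := pscal h (padd v e) in
  let rho := pnorm (psub E P) in
  let r := psub E P in
  let y := yv nu E0 P0 E P in
  let k := dv nu delta E0 P0 E P / rho in
  let W := padd y (pscal (nu*k) r) in
  let z := padd (pscal k r) (pscal nu y) in
  let dr := psub dE dP in
  let dy := psub (pscal (alphaA nu) dE) (pscal (betaA nu) dP) in
  let RC := RCv nu delta E0 P0 in
  let ga := gammaA nu in
  0 < pnorm z /\
  pnorm W ^ 2 - pnorm z ^ 2 = (1 - nu^2) * Fv nu delta E0 P0 E P /\
  Fv nu delta E0 P0 (padd E dE) (padd P dP) - Fv nu delta E0 P0 E P <=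
    2 * ga * u * h * (pnorm W - pnorm z) + 2 * ga * h * pnorm z * pnorm e
    + dot dy dy + (RC * ga / rho) * dot dr dr.
Proof.
  intros Hnu Hu Hd Hh Hrho HF HdE v dP rho r y k W z dr dy RC ga.
  assert (Hal := al_pos nu Hnu).
  assert (Hga : 0 < ga) by (unfold ga, gammaA; nra).
  assert (Hrc : 0 < RC).
  { unfold RC, RCv, apo_radius. pose proof (pnorm_nonneg (psub E0 P0)).
    assert (0 < gammaA nu) by (unfold gammaA; nra). nra. }
  assert (Hdk : dv nu delta E0 P0 E P = k * rho) by (unfold k; field; apply Rgt_not_eq; exact Hrho).
  assert (HWz : pnorm W ^ 2 - pnorm z ^ 2 = (1 - nu^2) * Fv nu delta E0 P0 E P).
  { rewrite !pnorm_sq. unfold W, z. rewrite W_z_identity.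
    unfold Fv. rewrite pnorm_sq. fold y. rewrite Hdk.
    replace (dot r r) with (rho^2) by (unfold rho, r; rewrite pnorm_sq; auto). ring. }
  assert (Hz : 0 < pnorm z).
  { assert (0 < pnorm z ^ 2).
    { pose proof (pow2_ge_0 (pnorm W)). assert (0 < 1 - nu^2) by nra.
      assert ((1 - nu^2) * Fv nu delta E0 P0 E P < 0).
      { set (F0 := Fv nu delta E0 P0 E P) in *. nra. } lra. }
    pose proof (pnorm_nonneg z). nra. }
  split; [exact Hz|]. split; [exact HWz|].
  assert (Hy' : yv nu E0 P0 (padd E dE) (padd P dP) = padd y dy).
  { unfold y, yv, dy, apo_center, padd, psub, pscal; simpl. apply pt_eq; simpl; ring. }
  assert (Hr' : psub (padd E dE) (padd P dP) = padd r dr).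
  { unfold r, dr, padd, psub; apply pt_eq; simpl; ring. }
  assert (Hd' : dv nu delta E0 P0 (padd E dE) (padd P dP) = RC - ga * pnorm (padd r dr)).
  { unfold dv, apo_radius. rewrite Hr'. auto. }
  unfold Fv. rewrite Hy', Hd'.
  assert (Hd0 : dv nu delta E0 P0 E P = RC - ga * rho) by (unfold dv, apo_radius; fold RC ga rho r; auto).
  rewrite Hd0. fold y.
  rewrite !pnorm_sq.
  pose proof (pnorm_padd_up r dr Hrho) as Hup. change (pnorm r) with rho in Hup.
  set (rho' := pnorm (padd r dr)) in *.
  assert (Hrho'2 : rho' ^ 2 = rho ^ 2 + 2 * dot r dr + dot dr dr).
  { unfold rho'. rewrite pnorm_sq. unfold rho. rewrite pnorm_sq. unfold dot, padd; simpl; ring. }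
  assert (Hyy : dot (padd y dy) (padd y dy) = dot y y + 2 * dot y dy + dot dy dy).
  { unfold dot, padd; simpl; ring. }
  rewrite Hyy.
  assert (Hquad : 2 * RC * ga * (rho' - rho) <= 2 * RC * ga * ((2 * dot r dr + dot dr dr) / (2 * rho))).
  { apply Rmult_le_compat_l; [|lra]. left. apply Rmult_lt_0_compat; [lra|auto]. }
  assert (Hlin : 2 * dot y dy + 2 * ga * k * dot r dr =
     2 * dot (padd (pscal (alphaA nu) y) (pscal (ga*k) r)) dE
     - 2 * ga * dot z (padd v e) * h).
  { unfold dy, dr, dP, z. unfold ga, gammaA, betaA.
    unfold dot, padd, pscal, psub; simpl. ring. }
  assert (HE : dot (padd (pscal (alphaA nu) y) (pscal (ga*k) r)) dE <= ga * u * h * pnorm W).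
  { eapply Rle_trans. apply cs.
    assert (Hn : nu * pnorm (padd (pscal (alphaA nu) y) (pscal (ga*k) r)) = ga * pnorm W).
    { pose proof (pnorm_scal nu (padd (pscal (alphaA nu) y) (pscal (ga*k) r))) as A1.
      pose proof (pnorm_scal ga W) as A2.
      rewrite Rabs_pos_eq in A1 by lra. rewrite Rabs_pos_eq in A2 by lra.
      rewrite <- A1, <- A2.
      apply pnorm_ext; unfold W, ga, gammaA, pscal, padd; simpl; ring. }
    pose proof (pnorm_nonneg (padd (pscal (alphaA nu) y) (pscal (ga*k) r))).
    apply Rle_trans with (pnorm (padd (pscal (alphaA nu) y) (pscal (ga*k) r)) * (nu * u * h)).
    apply Rmult_le_compat_l; auto.
    right. transitivity ((nu * pnorm (padd (pscal (alphaA nu) y) (pscal (ga*k) r))) * u * h); [ring|].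
    rewrite Hn. ring. }
  assert (Hzv : dot z v = u * pnorm z).
  { assert (Hv : v = pscal (u / pnorm z) z) by reflexivity.
    rewrite Hv, dot_pscal_r, <- pnorm_sq'. field. apply Rgt_not_eq; exact Hz. }
  assert (Hze : - dot z e <= pnorm z * pnorm e).
  { pose proof (cs_abs z e). pose proof (Rle_abs (- dot z e)). rewrite Rabs_Ropp in H0. lra. }
  assert (Hzve : dot z (padd v e) = dot z v + dot z e) by (rewrite dot_padd_r; auto).
  rewrite Hzve, Hzv in Hlin.
  assert (Hdd : 0 <= dot dr dr) by apply dot_self_nonneg.
  assert (Hk : ga * k = (RC * ga / rho - ga * ga)).
  { unfold k. rewrite Hd0. field. apply Rgt_not_eq; exact Hrho. }
  assert (E1: (RC - ga * rho') ^ 2 = RC^2 - 2 * RC * ga * rho' + ga^2 * rho'^2) by ring.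
  rewrite E1. rewrite Hrho'2.
  assert (E2: 2 * RC * ga * ((2 * dot r dr + dot dr dr) / (2 * rho)) = RC * ga / rho * (2 * dot r dr + dot dr dr)) by (field; apply Rgt_not_eq; exact Hrho).
  rewrite E2 in Hquad.
  assert (HRg : 0 <= RC * ga / rho).
  { apply Rle_mult_inv_pos; [|exact Hrho]. left; apply Rmult_lt_0_compat; auto. }
  set (G := RC * ga / rho) in *. set (X := dot r dr) in *. set (D := dot dr dr) in *.
  assert (Hlin' : 2 * dot y dy + 2 * (G - ga*ga) * X =
     2 * dot (padd (pscal (alphaA nu) y) (pscal (ga*k) r)) dE
     - 2 * ga * (u * pnorm z + dot z e) * h).
  { rewrite <- Hlin. rewrite <- Hk. ring. }
  assert (Hze' : - (ga * h * dot z e) <= ga * h * (pnorm z * pnorm e)).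
  { assert (0 < ga * h) by (apply Rmult_lt_0_compat; auto).
    assert (- (ga * h * dot z e) = ga * h * (- dot z e)) by ring. rewrite H0.
    apply Rmult_le_compat_l; [lra|exact Hze]. }
  assert (HGD : 0 <= G * D) by (apply Rmult_le_pos; auto).
  assert (Hgg : 0 <= ga * ga * D) by (apply Rmult_le_pos; auto; left; apply Rmult_lt_0_compat; auto).
  assert (Hq2 : 2 * RC * ga * (rho' - rho) <= G * (2 * X + D)) by exact Hquad.
  clear -Hlin' Hze' HGD Hgg Hq2 HE.
  assert (EE: 2 * RC * ga * (rho' - rho) = 2 * RC * ga * rho' - 2 * RC * ga * rho) by ring.
  rewrite EE in Hq2. clear EE.
  match goal with |- ?L <= ?R => 
    assert (L = 2 * dot y dy + (2 * RC * ga * rho' - 2 * RC * ga * rho) - ga^2 * (2*X + D) + dot dy dy) by ring end.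
  rewrite H; clear H.
  assert (ga ^ 2 * (2 * X + D) = 2 * (ga*ga) * X + ga*ga*D) by ring.
  rewrite H; clear H.
  assert (G * (2 * X + D) = 2 * G * X + G * D) by ring. rewrite H in Hq2; clear H.
  assert (2 * (G - ga * ga) * X = 2 * G * X - 2 * (ga*ga) * X) by ring. rewrite H in Hlin'; clear H.
  assert (2 * ga * (u * pnorm z + dot z e) * h = 2 * ga * u * h * pnorm z + 2 * (ga * h * dot z e)) by ring.
  rewrite H in Hlin'; clear H.
  assert (2 * ga * u * h * (pnorm W - pnorm z) = 2 * (ga * u * h * pnorm W) - 2 * ga * u * h * pnorm z) by ring.
  rewrite H; clear H.
  assert (2 * ga * h * pnorm z * pnorm e = 2 * (ga * h * (pnorm z * pnorm e))) by ring. rewrite H; clear H.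
  lra.
Qed.

Definition Mrate nu u delta (E0 P0 : Pt) :=
  gammaA nu * u * (1 - nu^2) * delta^2 / (4 * RCv nu delta E0 P0).

Lemma ga_pos nu : 0 < nu < 1 -> 0 < gammaA nu.
Proof. intros. unfold gammaA; pose proof (al_pos nu H). apply Rmult_lt_0_compat; lra. Qed.
Lemma RC_pos nu delta E0 P0 : 0 < nu < 1 -> 0 < delta -> 0 < RCv nu delta E0 P0.
Proof.
  intros. unfold RCv, apo_radius. pose proof (pnorm_nonneg (psub E0 P0)).
  assert (0 < gammaA nu) by (unfold gammaA; pose proof (al_pos nu H); apply Rmult_lt_0_compat; lra).
  assert (0 <= gammaA nu * pnorm (psub E0 P0)) by (apply Rmult_le_pos; lra). lra.
Qed.

Lemma be_pos nu : 0 < nu < 1 -> 0 < betaA nu.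
Proof. intros. unfold betaA; pose proof (al_pos nu H). apply Rmult_lt_0_compat; [nra|lra]. Qed.

Lemma Mrate_pos nu u delta E0 P0 : 0 < nu < 1 -> 0 < u -> 0 < delta -> 0 < Mrate nu u delta E0 P0.
Proof.
  intros. unfold Mrate. pose proof (RC_pos nu delta E0 P0 H H1). pose proof (ga_pos nu H).
  apply Rdiv_lt_0_compat; [|lra].
  assert (0 < 1 - nu^2) by nra. assert (0 < delta^2) by (apply pow_lt; lra).
  apply Rmult_lt_0_compat; [|lra]. apply Rmult_lt_0_compat; [|lra]. apply Rmult_lt_0_compat; lra.
Qed.

Lemma state_bounds nu delta E0 P0 E P :
  0 < nu < 1 -> 0 < delta -> 0 < pnorm (psub E P) ->
  Fv nu delta E0 P0 E P < 0 -> 0 < dv nu delta E0 P0 E P ->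
  pnorm (yv nu E0 P0 E P) < dv nu delta E0 P0 E P /\
  dv nu delta E0 P0 E P <= RCv nu delta E0 P0.
Proof.
  intros Hnu Hd Hr HF Hdv. split.
  - unfold Fv in HF. pose proof (pnorm_nonneg (yv nu E0 P0 E P)).
    set (a := pnorm (yv nu E0 P0 E P)) in *. set (b := dv nu delta E0 P0 E P) in *.
    destruct (Rlt_le_dec a b); auto. nra.
  - unfold dv, apo_radius. pose proof (pnorm_nonneg (psub E P)). pose proof (ga_pos nu Hnu).
    assert (0 <= gammaA nu * pnorm (psub E P)) by (apply Rmult_le_pos; lra). lra.
Qed.

Lemma sq_le_of_le a b : 0 <= a -> a <= b -> a * a <= b * b.
Proof. intros; nra. Qed.

Lemma dini_step nu u delta E0 P0 (xE xP : R -> Pt) t0 t :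
  0 < nu < 1 -> 0 < u -> 0 < delta -> t0 <= t ->
  (forall s t, t0 <= s -> t0 <= t -> pdist (xE t) (xE s) <= nu * u * Rabs (t - s)) ->
  0 < pnorm (psub (xE t) (xP t)) ->
  Fv nu delta E0 P0 (xE t) (xP t) <= - delta ^ 2 / 2 ->
  0 < dv nu delta E0 P0 (xE t) (xP t) ->
  derivable_pt_lim (fun s => fst (xP s)) t (fst (pursuer_law nu u delta E0 P0 (xE t) (xP t))) ->
  derivable_pt_lim (fun s => snd (xP s)) t (snd (pursuer_law nu u delta E0 P0 (xE t) (xP t))) ->
  exists eta, 0 < eta /\ forall h, 0 < h < eta ->
    Fv nu delta E0 P0 (xE (t + h)) (xP (t + h)) <=
    Fv nu delta E0 P0 (xE t) (xP t) - Mrate nu u delta E0 P0 / 2 * h.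
Proof.
  intros Hnu Hu Hd Ht HE Hrho HF Hdv D1 D2.
  set (M := Mrate nu u delta E0 P0).
  assert (HM : 0 < M) by (apply Mrate_pos; auto).
  set (RC := RCv nu delta E0 P0).
  assert (HRC : 0 < RC) by (apply RC_pos; auto).
  set (ga := gammaA nu). assert (Hga : 0 < ga) by (apply ga_pos; auto).
  set (al := alphaA nu). assert (Hal : 0 < al) by (apply al_pos; auto).
  set (be := betaA nu). assert (Hbe : 0 < be) by (apply be_pos; auto).
  set (rho := pnorm (psub (xE t) (xP t))) in *.
  set (v := pursuer_law nu u delta E0 P0 (xE t) (xP t)) in *.
  set (eps' := Rmin (1/2) (M / (32 * ga * RC))).
  assert (Heps' : 0 < eps').
  { unfold eps'. apply Rmin_glb_lt; [lra|]. apply Rdiv_lt_0_compat; auto.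
    apply Rmult_lt_0_compat; [lra|auto]. }
  destruct (D1 eps' Heps') as [eta1 H1].
  destruct (D2 eps' Heps') as [eta2 H2].
  set (K1 := al * nu * u + be * (u + 1)).
  set (K2 := nu * u + u + 1).
  set (K := K1 * K1 + (RC * ga / rho) * (K2 * K2)).
  assert (HK : 0 <= K).
  { unfold K. assert (0 <= RC * ga / rho).
    { apply Rle_mult_inv_pos; auto. left; apply Rmult_lt_0_compat; auto. }
    assert (0 <= K2 * K2) by nra. assert (0 <= K1 * K1) by nra.
    assert (0 <= RC * ga / rho * (K2 * K2)) by (apply Rmult_le_pos; auto). lra. }
  set (eta3 := M / (4 * K + 4)).
  assert (Heta3 : 0 < eta3) by (apply Rdiv_lt_0_compat; lra).
  exists (Rmin (Rmin eta1 eta2) (Rmin eta3 1)).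
  split.
  { apply Rmin_glb_lt; apply Rmin_glb_lt; try apply cond_pos; lra. }
  intros h [Hh0 Hh].
  assert (Hh1 : h < eta1) by (eapply Rlt_le_trans; [exact Hh|]; eapply Rle_trans; apply Rmin_l).
  assert (Hh2 : h < eta2).
  { eapply Rlt_le_trans; [exact Hh|]. eapply Rle_trans; [apply Rmin_l|apply Rmin_r]. }
  assert (Hh3 : h < eta3).
  { eapply Rlt_le_trans; [exact Hh|]. eapply Rle_trans; [apply Rmin_r|apply Rmin_l]. }
  assert (Hh4 : h < 1).
  { eapply Rlt_le_trans; [exact Hh|]. eapply Rle_trans; [apply Rmin_r|apply Rmin_r]. }
  assert (Habsh : Rabs h = h) by (apply Rabs_pos_eq; lra).
  specialize (H1 h (Rgt_not_eq _ _ Hh0) ltac:(rewrite Habsh; auto)).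
  specialize (H2 h (Rgt_not_eq _ _ Hh0) ltac:(rewrite Habsh; auto)).
  set (e := ((fst (xP (t+h)) - fst (xP t)) / h - fst v, (snd (xP (t+h)) - snd (xP t)) / h - snd v)).
  set (dE := psub (xE (t+h)) (xE t)).
  assert (HdE : pnorm dE <= nu * u * h).
  { unfold dE. fold (pdist (xE (t+h)) (xE t)).
    assert (A := HE t (t+h) Ht ltac:(lra)). replace (t + h - t) with h in A by ring.
    rewrite Habsh in A. exact A. }
  assert (Hne : pnorm e <= 2 * eps').
  { eapply Rle_trans. apply pnorm_coord_le. unfold e. cbn [fst snd]. lra. }
  assert (HEq : xE (t+h) = padd (xE t) dE).
  { unfold dE; apply pt_eq; unfold padd, psub; simpl; ring. }
  assert (HPq : xP (t+h) = padd (xP t) (pscal h (padd v e))).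
  { apply pt_eq; unfold e, padd, pscal; cbn [fst snd]; field; apply Rgt_not_eq; lra. }
  rewrite HEq, HPq.
  destruct (state_bounds nu delta E0 P0 (xE t) (xP t) Hnu Hd Hrho ltac:(nra) Hdv) as [Hy Hdle].
  fold RC in Hdle.
  pose proof (key_incr nu u delta E0 P0 (xE t) (xP t) dE e h Hnu Hu Hd Hh0 Hrho ltac:(nra) HdE)
    as KI. cbv zeta in KI. destruct KI as [Hz [HWz Hinc]].
  fold v rho RC ga in Hinc.
  set (y := yv nu E0 P0 (xE t) (xP t)) in *.
  set (d := dv nu delta E0 P0 (xE t) (xP t)) in *.
  set (r := psub (xE t) (xP t)) in *.
  set (k := d / rho) in *.
  set (W := padd y (pscal (nu * k) r)) in *.
  set (z := padd (pscal k r) (pscal nu y)) in *.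
  set (F := Fv nu delta E0 P0 (xE t) (xP t)) in *.
  assert (Hz0 : 0 < pnorm z) by exact Hz. clear Hz. rename Hz0 into Hz.
  assert (Hk : 0 < k) by (unfold k; apply Rdiv_lt_0_compat; auto).
  assert (Hkr : pnorm (pscal k r) = d).
  { rewrite pnorm_scal, Rabs_pos_eq by lra. unfold k. fold rho. field. lra. }
  assert (HWb : pnorm W <= pnorm y + nu * d).
  { eapply Rle_trans. apply ptri. rewrite pnorm_scal, Rabs_pos_eq by nra.
    replace (nu * k * pnorm r) with (nu * pnorm (pscal k r)) by (rewrite pnorm_scal, Rabs_pos_eq by lra; ring).
    rewrite Hkr. lra. }
  assert (Hzb : pnorm z <= d + nu * pnorm y).
  { eapply Rle_trans. apply ptri. rewrite Hkr, pnorm_scal, Rabs_pos_eq by lra. lra. }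
  pose proof (pnorm_nonneg y). pose proof (pnorm_nonneg W). pose proof (pnorm_nonneg z).
  assert (HWz4 : pnorm W + pnorm z <= 4 * RC) by nra.
  assert (Hmain : 2 * ga * u * h * (pnorm W - pnorm z) <= - M * h).
  { assert (Hdiff : pnorm W - pnorm z <= - (1 - nu^2) * delta^2 / (8 * RC)).
    { assert (HWz' : (pnorm W - pnorm z) * (pnorm W + pnorm z) = (1 - nu^2) * F) by (rewrite <- HWz; unfold W, z, k, rho, r; ring).
      assert (Hn2 : 0 < 1 - nu^2) by nra.
      assert (Hneg : (1 - nu^2) * F <= - (1 - nu^2) * delta^2/2) by nra.
      assert (Hdd2 : 0 < (1 - nu^2) * delta^2) by (apply Rmult_lt_0_compat; [lra|apply pow_lt; lra]).
      assert (Hlt : pnorm W - pnorm z < 0).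
      { destruct (Rlt_le_dec (pnorm W - pnorm z) 0); auto.
        assert (0 <= (pnorm W - pnorm z) * (pnorm W + pnorm z)) by (apply Rmult_le_pos; lra). lra. }
      apply (Rmult_le_reg_r (8 * RC)); [lra|].
      replace (- (1 - nu ^ 2) * delta ^ 2 / (8 * RC) * (8 * RC)) with (- (1 - nu ^ 2) * delta ^ 2) by (field; lra).
      nra. }
    unfold M, Mrate. fold ga RC.
    assert (0 < ga * u * h) by (apply Rmult_lt_0_compat; [apply Rmult_lt_0_compat|]; lra).
    apply Rle_trans with (2 * (ga * u * h) * (- (1 - nu ^ 2) * delta ^ 2 / (8 * RC))).
    { replace (2 * ga * u * h * (pnorm W - pnorm z)) with (2 * (ga * u * h) * (pnorm W - pnorm z)) by ring.
      apply Rmult_le_compat_l; lra. }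
    right. field. lra. }
  assert (Herr : 2 * ga * h * pnorm z * pnorm e <= M / 4 * h).
  { assert (Hz2 : pnorm z <= 2 * RC) by nra.
    assert (He2 : pnorm e <= M / (16 * ga * RC)).
    { eapply Rle_trans; [exact Hne|]. unfold eps'.
      assert (Rmin (1/2) (M / (32 * ga * RC)) <= M / (32 * ga * RC)) by apply Rmin_r.
      replace (M / (16 * ga * RC)) with (2 * (M / (32 * ga * RC))) by (field; lra). lra. }
    pose proof (pnorm_nonneg e).
    apply Rle_trans with (2 * ga * h * (2 * RC) * (M / (16 * ga * RC))).
    { assert (0 < 2 * ga * h) by (apply Rmult_lt_0_compat; lra).
      apply Rmult_le_compat; try nra. }
    right. field. lra. }
  assert (Hv : pnorm v = u).
  { assert (Hvd : v = pscal (u / pnorm z) z) by reflexivity. rewrite Hvd, pnorm_scal.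
    assert (Huz : 0 <= u / pnorm z) by (apply Rle_mult_inv_pos; lra). rewrite Rabs_pos_eq by exact Huz. field. apply Rgt_not_eq; lra. }
  assert (Hne1 : pnorm e <= 1).
  { eapply Rle_trans; [exact Hne|]. unfold eps'. pose proof (Rmin_l (1/2) (M / (32 * ga * RC))). lra. }
  assert (HdP : pnorm (pscal h (padd v e)) <= h * (u + 1)).
  { rewrite pnorm_scal, Rabs_pos_eq by lra. apply Rmult_le_compat_l; [lra|].
    eapply Rle_trans; [apply ptri|]. lra. }
  pose proof (pnorm_nonneg dE) as HdE0.
  pose proof (pnorm_nonneg (pscal h (padd v e))) as HdP0.
  set (dP := pscal h (padd v e)) in *.
  assert (Hdy : pnorm (psub (pscal al dE) (pscal be dP)) <= h * K1).
  { replace (psub (pscal al dE) (pscal be dP)) with (padd (pscal al dE) (pscal (-be) dP))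
      by (apply pt_eq; unfold psub, padd, pscal; simpl; ring).
    eapply Rle_trans; [apply ptri|]. rewrite !pnorm_scal. rewrite Rabs_Ropp.
    rewrite (Rabs_pos_eq al) by lra. rewrite (Rabs_pos_eq be) by lra.
    unfold K1. assert (al * pnorm dE <= al * (nu * u * h)) by (apply Rmult_le_compat_l; lra).
    assert (be * pnorm dP <= be * (h * (u + 1))) by (apply Rmult_le_compat_l; lra). nra. }
  assert (Hdr : pnorm (psub dE dP) <= h * K2).
  { replace (psub dE dP) with (padd dE (pscal (- (1)) dP))
      by (apply pt_eq; unfold psub, padd, pscal; simpl; ring).
    eapply Rle_trans; [apply ptri|]. rewrite pnorm_scal, Rabs_Ropp, Rabs_R1.
    unfold K2. nra. }
  assert (Hq : dot (psub (pscal al dE) (pscal be dP)) (psub (pscal al dE) (pscal be dP))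
               + RC * ga / rho * dot (psub dE dP) (psub dE dP) <= h * h * K).
  { rewrite <- !pnorm_sq'.
    pose proof (sq_le_of_le _ _ (pnorm_nonneg _) Hdy).
    pose proof (sq_le_of_le _ _ (pnorm_nonneg _) Hdr).
    assert (0 <= RC * ga / rho).
    { apply Rle_mult_inv_pos; auto. left; apply Rmult_lt_0_compat; auto. }
    unfold K.
    assert (RC * ga / rho * (pnorm (psub dE dP) * pnorm (psub dE dP)) <= RC * ga / rho * (h * K2 * (h * K2)))
      by (apply Rmult_le_compat_l; auto).
    nra. }
  assert (HhK : h * h * K <= M / 4 * h).
  { assert (h * K <= M / 4).
    { assert (h * (4 * K + 4) < M).
      { unfold eta3 in Hh3. apply (Rmult_lt_compat_r (4*K+4)) in Hh3; [|lra].
        unfold Rdiv in Hh3. rewrite Rmult_assoc, Rinv_l in Hh3 by lra. lra. }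
      nra. }
    nra. }
  fold al be in Hinc.
  lra.
Qed.

Lemma pnorm_diff_le a b : Rabs (pnorm a - pnorm b) <= pnorm (psub a b).
Proof.
  apply Rabs_le; split.
  - assert (pnorm b <= pnorm (psub b a) + pnorm a).
    { replace b with (padd (psub b a) a) at 1 by (apply pt_eq; unfold padd, psub; simpl; ring). apply ptri. }
    assert (pnorm (psub b a) = pnorm (psub a b)) by (apply (pdist_sym b a)). lra.
  - assert (pnorm a <= pnorm (psub a b) + pnorm b).
    { replace a with (padd (psub a b) b) at 1 by (apply pt_eq; unfold padd, psub; simpl; ring). apply ptri. }
    lra.
Qed.

Lemma sq_cont a a' w : Rabs (a' - a) <= w -> Rabs (a' ^ 2 - a ^ 2) <= w * (w + 2 * Rabs a).
Proof.
  intros H. replace (a'^2 - a^2) with ((a' - a) * ((a' - a) + 2 * a)) by ring.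
  rewrite Rabs_mult. pose proof (Rabs_pos (a' - a)).
  apply Rmult_le_compat; auto. apply Rabs_pos.
  eapply Rle_trans. apply Rabs_triang. rewrite Rabs_mult, (Rabs_pos_eq 2) by lra. lra.
Qed.

Lemma rho_diff E P E' P' :
  Rabs (pnorm (psub E' P') - pnorm (psub E P)) <= pdist E' E + pdist P' P.
Proof.
  eapply Rle_trans. apply pnorm_diff_le.
  replace (psub (psub E' P') (psub E P)) with (padd (psub E' E) (pscal (- (1)) (psub P' P)))
    by (apply pt_eq; unfold padd, psub, pscal; simpl; ring).
  eapply Rle_trans. apply ptri. rewrite pnorm_scal, Rabs_Ropp, Rabs_R1. unfold pdist. lra.
Qed.

Lemma y_diff nu E0 P0 E P E' P' : 0 < nu < 1 ->
  Rabs (pnorm (yv nu E0 P0 E' P') - pnorm (yv nu E0 P0 E P)) <=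
  alphaA nu * pdist E' E + betaA nu * pdist P' P.
Proof.
  intros Hnu. eapply Rle_trans. apply pnorm_diff_le.
  replace (psub (yv nu E0 P0 E' P') (yv nu E0 P0 E P)) with
      (padd (pscal (alphaA nu) (psub E' E)) (pscal (- betaA nu) (psub P' P)))
    by (apply pt_eq; unfold yv, apo_center, padd, psub, pscal; simpl; ring).
  eapply Rle_trans. apply ptri. rewrite !pnorm_scal, Rabs_Ropp.
  rewrite (Rabs_pos_eq (alphaA nu)) by (apply Rlt_le, al_pos; auto).
  rewrite (Rabs_pos_eq (betaA nu)) by (apply Rlt_le, be_pos; auto).
  unfold pdist. lra.
Qed.

Lemma d_diff nu delta E0 P0 E P E' P' : 0 < nu < 1 ->
  Rabs (dv nu delta E0 P0 E' P' - dv nu delta E0 P0 E P) <=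
  gammaA nu * (pdist E' E + pdist P' P).
Proof.
  intros Hnu. unfold dv, apo_radius.
  replace (RCv nu delta E0 P0 - gammaA nu * pnorm (psub E' P') - (RCv nu delta E0 P0 - gammaA nu * pnorm (psub E P)))
    with (- (gammaA nu * (pnorm (psub E' P') - pnorm (psub E P)))) by ring.
  rewrite Rabs_Ropp, Rabs_mult, (Rabs_pos_eq (gammaA nu)) by (apply Rlt_le, ga_pos; auto).
  apply Rmult_le_compat_l. apply Rlt_le, ga_pos; auto. apply rho_diff.
Qed.

Lemma Fv_cont nu delta E0 P0 E P : 0 < nu < 1 ->
  forall eps, 0 < eps -> exists eta, 0 < eta /\ forall E' P', pdist E' E < eta -> pdist P' P < eta ->
    Rabs (Fv nu delta E0 P0 E' P' - Fv nu delta E0 P0 E P) < eps.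
Proof.
  intros Hnu eps Heps.
  set (al := alphaA nu). set (be := betaA nu). set (ga := gammaA nu).
  assert (Hal : 0 < al) by (apply al_pos; auto).
  assert (Hbe : 0 < be) by (apply be_pos; auto).
  assert (Hga : 0 < ga) by (apply ga_pos; auto).
  set (Y := pnorm (yv nu E0 P0 E P)). set (d := dv nu delta E0 P0 E P).
  set (c1 := al + be). set (c2 := 2 * ga).
  set (B := c1 * (c1 + 2 * Rabs Y) + c2 * (c2 + 2 * Rabs d) + 1).
  assert (HB : 1 <= B).
  { unfold B. pose proof (Rabs_pos Y). pose proof (Rabs_pos d).
    assert (0 <= c1 * (c1 + 2 * Rabs Y)) by (apply Rmult_le_pos; unfold c1; lra).
    assert (0 <= c2 * (c2 + 2 * Rabs d)) by (apply Rmult_le_pos; unfold c2; lra). lra. }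
  exists (Rmin 1 (eps / (2 * B))). split.
  { apply Rmin_glb_lt; [lra|]. apply Rdiv_lt_0_compat; lra. }
  intros E' P' HE HP.
  set (eta := Rmin 1 (eps / (2 * B))) in *.
  assert (Heta1 : eta <= 1) by apply Rmin_l.
  assert (Heta2 : eta <= eps / (2 * B)) by apply Rmin_r.
  pose proof (pdist_pos E' E) as _.
  assert (H0E : 0 <= pdist E' E) by apply pnorm_nonneg.
  assert (H0P : 0 <= pdist P' P) by apply pnorm_nonneg.
  assert (Hy : Rabs (pnorm (yv nu E0 P0 E' P') - Y) <= c1 * eta).
  { eapply Rle_trans. apply y_diff; auto. unfold c1. fold al be.
    assert (al * pdist E' E <= al * eta) by (apply Rmult_le_compat_l; lra).
    assert (be * pdist P' P <= be * eta) by (apply Rmult_le_compat_l; lra). lra. }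
  assert (Hd : Rabs (dv nu delta E0 P0 E' P' - d) <= c2 * eta).
  { eapply Rle_trans. apply d_diff; auto. unfold c2. fold ga.
    assert (ga * (pdist E' E + pdist P' P) <= ga * (2 * eta)) by (apply Rmult_le_compat_l; lra). lra. }
  apply sq_cont in Hy. apply sq_cont in Hd.
  unfold Fv. fold Y d.
  replace (pnorm (yv nu E0 P0 E' P') ^ 2 - dv nu delta E0 P0 E' P' ^ 2 - (Y ^ 2 - d ^ 2))
    with ((pnorm (yv nu E0 P0 E' P') ^ 2 - Y^2) + - (dv nu delta E0 P0 E' P' ^ 2 - d ^ 2)) by ring.
  eapply Rle_lt_trans. apply Rabs_triang.
  assert (Hpos : 0 < eta) by (unfold eta; apply Rmin_glb_lt; [lra|apply Rdiv_lt_0_compat; lra]).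
  assert (c1 * eta * (c1 * eta + 2 * Rabs Y) <= eta * (c1 * (c1 + 2 * Rabs Y))).
  { pose proof (Rabs_pos Y). unfold c1 in *.
    replace (eta * ((al + be) * (al + be + 2 * Rabs Y))) with ((al+be) * eta * ((al+be) + 2 * Rabs Y)) by ring.
    apply Rmult_le_compat_l. nra. nra. }
  assert (c2 * eta * (c2 * eta + 2 * Rabs d) <= eta * (c2 * (c2 + 2 * Rabs d))).
  { pose proof (Rabs_pos d). unfold c2 in *.
    replace (eta * (2 * ga * (2 * ga + 2 * Rabs d))) with (2 * ga * eta * (2 * ga + 2 * Rabs d)) by ring.
    apply Rmult_le_compat_l. nra. nra. }
  assert (eta * B <= eps / 2).
  { apply (Rmult_le_compat_r B) in Heta2; [|lra].
    replace (eps / (2 * B) * B) with (eps / 2) in Heta2 by (field; lra). lra. }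
  assert (eta * (c1 * (c1 + 2 * Rabs Y)) + eta * (c2 * (c2 + 2 * Rabs d)) <= eta * B).
  { unfold B. lra. }
  rewrite Rabs_Ropp in *. lra.
Qed.

Lemma cont_ind (a b : R) (P : R -> Prop) : a <= b -> P a ->
  (forall t, a < t <= b -> (forall s, a <= s < t -> P s) -> P t) ->
  (forall t, a <= t < b -> (forall s, a <= s <= t -> P s) ->
      exists eta, 0 < eta /\ forall s, t < s < t + eta -> s <= b -> P s) ->
  forall t, a <= t <= b -> P t.
Proof.
  intros Hab Pa Hcl Hop.
  set (S := fun x => a <= x <= b /\ forall s, a <= s <= x -> P s).
  assert (Hb : bound S) by (exists b; intros x [Hx _]; lra).
  assert (Hne : exists x, S x) by (exists a; split; [lra| intros s Hs; replace s with a by lra; auto]).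
  destruct (completeness S Hb Hne) as [c [Hub Hlub]].
  assert (Hac : a <= c) by (apply Hub; destruct Hne as [x Hx]; unfold S; split; [lra|intros s Hs; replace s with a by lra; auto]).
  assert (Hcb : c <= b) by (apply Hlub; intros x [Hx _]; lra).
  assert (HA : forall s, a <= s < c -> P s).
  { intros s Hs. apply NNPP; intro HPs.
    assert (c <= s).
    { apply Hlub. intros x [Hx Hx2]. destruct (Rle_dec x s); auto.
      exfalso; apply HPs, Hx2; lra. }
    lra. }
  assert (HPc : P c).
  { destruct (Req_dec c a) as [E|E]. subst; auto. apply Hcl; [lra|auto]. }
  assert (HSc : forall s, a <= s <= c -> P s).
  { intros s Hs. destruct (Req_dec s c). subst; auto. apply HA; lra. }
  assert (Hcb' : c = b).
  { destruct (Req_dec c b); auto. exfalso.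
    destruct (Hop c ltac:(lra) HSc) as [eta [Heta Hs]].
    set (s' := Rmin (c + eta/2) b).
    assert (Hs1 : s' <= c + eta/2) by apply Rmin_l.
    assert (Hs2 : s' <= b) by apply Rmin_r.
    assert (Hs3 : c < s') by (apply Rmin_glb_lt; lra).
    assert (S s').
    { split; [lra|]. intros s0 Hs0. destruct (Rle_dec s0 c). apply HSc; lra. apply Hs; lra. }
    assert (s' <= c) by (apply Hub; auto). lra. }
  intros t Ht. apply HSc. lra.
Qed.

Definition Econt (xE : R -> Pt) nuu t0 :=
  forall s t, t0 <= s -> t0 <= t -> pdist (xE t) (xE s) <= nuu * Rabs (t - s).
Definition Pcont (xP : R -> Pt) t0 :=
  forall t, t0 <= t -> forall eps, 0 < eps -> exists eta, 0 < eta /\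
        forall s, t0 <= s -> Rabs (s - t) < eta -> pdist (xP s) (xP t) < eps.

Lemma traj_cont xE xP nuu t0 t : 0 <= nuu -> Econt xE nuu t0 -> Pcont xP t0 -> t0 <= t ->
  forall eps, 0 < eps -> exists eta, 0 < eta /\ forall s, t0 <= s -> Rabs (s - t) < eta ->
    pdist (xE s) (xE t) < eps /\ pdist (xP s) (xP t) < eps.
Proof.
  intros Hn HE HP Ht eps Heps.
  destruct (HP t Ht eps Heps) as [eta [Heta H]].
  exists (Rmin eta (eps / (nuu + 1))). split.
  { apply Rmin_glb_lt; auto. apply Rdiv_lt_0_compat; lra. }
  intros s Hs Hst. split.
  - eapply Rle_lt_trans. apply HE; auto.
    assert (Rabs (s - t) < eps / (nuu + 1)) by (eapply Rlt_le_trans; [exact Hst|apply Rmin_r]).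
    apply Rle_lt_trans with ((nuu + 1) * Rabs (s - t)).
    { pose proof (Rabs_pos (s - t)). nra. }
    apply (Rmult_lt_compat_l (nuu + 1)) in H0; [|lra].
    replace ((nuu + 1) * (eps / (nuu + 1))) with eps in H0 by (field; lra). lra.
  - apply H; auto. eapply Rlt_le_trans; [exact Hst|apply Rmin_l].
Qed.

Lemma F_traj_cont nu delta E0 P0 xE xP nuu t0 t : 0 < nu < 1 -> 0 <= nuu ->
  Econt xE nuu t0 -> Pcont xP t0 -> t0 <= t ->
  forall eps, 0 < eps -> exists eta, 0 < eta /\ forall s, t0 <= s -> Rabs (s - t) < eta ->
    Rabs (Fv nu delta E0 P0 (xE s) (xP s) - Fv nu delta E0 P0 (xE t) (xP t)) < eps.
Proof.
  intros Hnu Hn HE HP Ht eps Heps.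
  destruct (Fv_cont nu delta E0 P0 (xE t) (xP t) Hnu eps Heps) as [e1 [He1 H1]].
  destruct (traj_cont xE xP nuu t0 t Hn HE HP Ht e1 He1) as [e2 [He2 H2]].
  exists e2. split; auto. intros s Hs Hst. destruct (H2 s Hs Hst). apply H1; auto.
Qed.

Lemma d_traj_cont nu delta E0 P0 xE xP nuu t0 t : 0 < nu < 1 -> 0 <= nuu ->
  Econt xE nuu t0 -> Pcont xP t0 -> t0 <= t ->
  forall eps, 0 < eps -> exists eta, 0 < eta /\ forall s, t0 <= s -> Rabs (s - t) < eta ->
    Rabs (dv nu delta E0 P0 (xE s) (xP s) - dv nu delta E0 P0 (xE t) (xP t)) < eps.
Proof.
  intros Hnu Hn HE HP Ht eps Heps.
  assert (Hga := ga_pos nu Hnu).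
  set (e1 := eps / (2 * gammaA nu + 1)).
  assert (He1 : 0 < e1) by (apply Rdiv_lt_0_compat; lra).
  destruct (traj_cont xE xP nuu t0 t Hn HE HP Ht e1 He1) as [e2 [He2 H2]].
  exists e2. split; auto. intros s Hs Hst. destruct (H2 s Hs Hst).
  eapply Rle_lt_trans. apply d_diff; auto.
  apply Rle_lt_trans with (gammaA nu * (2 * e1)).
  { apply Rmult_le_compat_l; lra. }
  unfold e1. apply Rmult_lt_reg_r with (2 * gammaA nu + 1); [lra|].
  replace (gammaA nu * (2 * (eps / (2 * gammaA nu + 1))) * (2 * gammaA nu + 1)) with (gammaA nu * 2 * eps)
    by (field; lra). nra.
Qed.

Lemma F_init nu delta E0 P0 : Fv nu delta E0 P0 E0 P0 = - delta ^ 2.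
Proof.
  unfold Fv, dv, RCv, yv.
  replace (psub (apo_center nu E0 P0) (apo_center nu E0 P0)) with (0, 0)
    by (apply pt_eq; unfold psub; simpl; ring).
  unfold pnorm; cbn [fst snd]. replace (0^2 + 0^2) with 0 by ring. rewrite sqrt_0. ring.
Qed.

Lemma d_init nu delta E0 P0 : dv nu delta E0 P0 E0 P0 = delta.
Proof. unfold dv, RCv. ring. Qed.

Lemma invariant nu u delta (xE xP : R -> Pt) t0 T :
  0 < nu < 1 -> 0 < u -> 0 < delta -> t0 <= T ->
  Econt xE (nu * u) t0 -> Pcont xP t0 ->
  (forall t, t0 < t < T ->
     derivable_pt_lim (fun s => fst (xP s)) t (fst (pursuer_law nu u delta (xE t0) (xP t0) (xE t) (xP t))) /\
     derivable_pt_lim (fun s => snd (xP s)) t (snd (pursuer_law nu u delta (xE t0) (xP t0) (xE t) (xP t)))) ->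
  (forall t, t0 <= t < T -> xP t <> xE t) ->
  forall t, t0 <= t <= T ->
    Fv nu delta (xE t0) (xP t0) (xE t) (xP t) <= - delta ^ 2 / 2 - Mrate nu u delta (xE t0) (xP t0) / 2 * (t - t0)
    /\ 0 < dv nu delta (xE t0) (xP t0) (xE t) (xP t).
Proof.
  intros Hnu Hu Hd HT HE HP HD Hnc.
  set (E0 := xE t0). set (P0 := xP t0).
  set (M := Mrate nu u delta E0 P0).
  assert (HM : 0 < M) by (apply Mrate_pos; auto).
  assert (Hnuu : 0 <= nu * u) by nra.
  set (F := fun t => Fv nu delta E0 P0 (xE t) (xP t)).
  set (dd := fun t => dv nu delta E0 P0 (xE t) (xP t)).
  set (B := fun t => - delta ^ 2 / 2 - M / 2 * (t - t0)).
  assert (Hd2 : 0 < delta ^ 2) by (apply pow_lt; lra).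
  apply (cont_ind t0 T (fun t => F t <= B t /\ 0 < dd t)); auto.
  -
    unfold F, dd, B, E0, P0. rewrite F_init, d_init. split; lra.
  -
    intros t Ht IH. split.
    + apply NNPP; intro Hc. apply Rnot_le_lt in Hc.
      set (gap := F t - B t).
      assert (Hgap : 0 < gap) by (unfold gap; lra).
      destruct (F_traj_cont nu delta E0 P0 xE xP (nu*u) t0 t Hnu Hnuu HE HP ltac:(lra) (gap/2) ltac:(lra))
        as [eta [Heta Hc2]].
      set (th := Rmin (Rmin eta (gap / M)) (t - t0) / 2).
      assert (Hth0 : 0 < th).
      { unfold th. apply Rdiv_lt_0_compat; [|lra]. apply Rmin_glb_lt; [apply Rmin_glb_lt|]; try lra.
        apply Rdiv_lt_0_compat; lra. }
      assert (Hth1 : th < eta).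
      { unfold th. pose proof (Rmin_l (Rmin eta (gap / M)) (t - t0)). pose proof (Rmin_l eta (gap/M)). lra. }
      assert (Hth2 : th <= gap / M / 2).
      { unfold th. pose proof (Rmin_l (Rmin eta (gap / M)) (t - t0)). pose proof (Rmin_r eta (gap/M)). lra. }
      assert (Hth3 : th < t - t0).
      { unfold th. pose proof (Rmin_r (Rmin eta (gap / M)) (t - t0)). lra. }
      specialize (IH (t - th) ltac:(lra)). destruct IH as [IH _].
      specialize (Hc2 (t - th) ltac:(lra)). rewrite Rabs_minus_sym in Hc2.
      replace (t - (t - th)) with th in Hc2 by ring. rewrite Rabs_pos_eq in Hc2 by lra.
      specialize (Hc2 Hth1). fold (F (t - th)) in Hc2. fold (F t) in Hc2.
      apply Rabs_def2 in Hc2.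
      assert (M * th <= gap / 2).
      { apply (Rmult_le_compat_l M) in Hth2; [|lra]. replace (M * (gap / M / 2)) with (gap/2) in Hth2 by (field; lra). lra. }
      unfold B in *. unfold gap in *. lra.
    +
      assert (HFt : F t < 0).
      {
        apply NNPP; intro Hc. apply Rnot_lt_le in Hc.
        destruct (F_traj_cont nu delta E0 P0 xE xP (nu*u) t0 t Hnu Hnuu HE HP ltac:(lra) (delta^2/2) ltac:(lra))
          as [eta [Heta Hc2]].
        set (th := Rmin eta (t - t0) / 2).
        assert (0 < th) by (unfold th; apply Rdiv_lt_0_compat; [apply Rmin_glb_lt|]; lra).
        assert (th < eta) by (unfold th; pose proof (Rmin_l eta (t - t0)); lra).
        assert (th < t - t0) by (unfold th; pose proof (Rmin_r eta (t - t0)); lra).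
        destruct (IH (t - th) ltac:(lra)) as [IH1 _].
        specialize (Hc2 (t - th) ltac:(lra)). rewrite Rabs_minus_sym in Hc2.
        replace (t - (t - th)) with th in Hc2 by ring. rewrite Rabs_pos_eq in Hc2 by lra.
        specialize (Hc2 H0). apply Rabs_def2 in Hc2. fold (F (t - th)) (F t) in Hc2.
        unfold B in IH1. assert (0 <= M / 2 * (t - th - t0)) by (apply Rmult_le_pos; lra). lra. }
      assert (Hdne : dd t <> 0).
      { intro H0. unfold F in HFt. unfold Fv in HFt. fold (dd t) in HFt. rewrite H0 in HFt.
        pose proof (pow2_ge_0 (pnorm (yv nu E0 P0 (xE t) (xP t)))). lra. }
      destruct (Rlt_le_dec 0 (dd t)) as [Hp|Hn]; auto. exfalso.
      assert (Hneg : dd t < 0) by lra.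
      destruct (d_traj_cont nu delta E0 P0 xE xP (nu*u) t0 t Hnu Hnuu HE HP ltac:(lra) (- dd t) ltac:(lra))
        as [eta [Heta Hc2]].
      set (th := Rmin eta (t - t0) / 2).
      assert (0 < th) by (unfold th; apply Rdiv_lt_0_compat; [apply Rmin_glb_lt|]; lra).
      assert (th < eta) by (unfold th; pose proof (Rmin_l eta (t - t0)); lra).
      assert (th < t - t0) by (unfold th; pose proof (Rmin_r eta (t - t0)); lra).
      destruct (IH (t - th) ltac:(lra)) as [_ IH2].
      specialize (Hc2 (t - th) ltac:(lra)). rewrite Rabs_minus_sym in Hc2.
      replace (t - (t - th)) with th in Hc2 by ring. rewrite Rabs_pos_eq in Hc2 by lra.
      specialize (Hc2 H0). apply Rabs_def2 in Hc2. fold (dd (t - th)) (dd t) in Hc2. lra.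
  -
    intros t Ht IH.
    destruct (IH t ltac:(lra)) as [HFt Hdt].
    destruct (d_traj_cont nu delta E0 P0 xE xP (nu*u) t0 t Hnu Hnuu HE HP ltac:(lra) (dd t) Hdt)
      as [eta2 [Heta2 Hc2]].
    destruct (Req_dec t t0) as [Et|Et].
    + subst t.
      destruct (F_traj_cont nu delta E0 P0 xE xP (nu*u) t0 t0 Hnu Hnuu HE HP ltac:(lra) (delta^2/4) ltac:(lra))
        as [eta1 [Heta1 Hc1]].
      exists (Rmin (Rmin eta1 eta2) (delta^2 / (2 * M))). split.
      { apply Rmin_glb_lt; [apply Rmin_glb_lt|]; auto. apply Rdiv_lt_0_compat; lra. }
      intros s Hs HsT.
      pose proof (Rmin_l (Rmin eta1 eta2) (delta^2 / (2 * M))).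
      pose proof (Rmin_r (Rmin eta1 eta2) (delta^2 / (2 * M))).
      pose proof (Rmin_l eta1 eta2). pose proof (Rmin_r eta1 eta2).
      assert (Habs : Rabs (s - t0) = s - t0) by (apply Rabs_pos_eq; lra).
      specialize (Hc1 s ltac:(lra) ltac:(rewrite Habs; lra)).
      specialize (Hc2 s ltac:(lra) ltac:(rewrite Habs; lra)).
      apply Rabs_def2 in Hc1. apply Rabs_def2 in Hc2.
      fold (F s) (F t0) in Hc1. fold (dd s) (dd t0) in Hc2.
      assert (HF0 : F t0 = - delta^2) by (unfold F, E0, P0; apply F_init).
      split; [|lra].
      unfold B. assert (M / 2 * (s - t0) <= delta ^ 2 / 4).
      { assert (s - t0 <= delta^2 / (2*M)) by lra.
        apply (Rmult_le_compat_l (M/2)) in H3; [|lra].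
        replace (M / 2 * (delta ^ 2 / (2 * M))) with (delta^2/4) in H3 by (field; lra). lra. }
      lra.
    + assert (Ht0 : t0 < t) by lra.
      destruct (HD t ltac:(lra)) as [D1 D2].
      assert (Hrho : 0 < pnorm (psub (xE t) (xP t))).
      { apply pdist_pos. intro Heq. apply (Hnc t ltac:(lra)). auto. }
      assert (HFt' : Fv nu delta E0 P0 (xE t) (xP t) <= - delta ^ 2 / 2).
      { fold (F t). unfold B in HFt. assert (0 <= M / 2 * (t - t0)) by (apply Rmult_le_pos; lra). lra. }
      destruct (dini_step nu u delta E0 P0 xE xP t0 t Hnu Hu Hd ltac:(lra) HE Hrho HFt' Hdt D1 D2)
        as [eta1 [Heta1 Hc1]].
      exists (Rmin eta1 eta2). split; [apply Rmin_glb_lt; auto|].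
      intros s Hs HsT.
      pose proof (Rmin_l eta1 eta2). pose proof (Rmin_r eta1 eta2).
      specialize (Hc1 (s - t) ltac:(lra)). replace (t + (s - t)) with s in Hc1 by ring.
      fold M in Hc1. fold (F s) (F t) in Hc1.
      assert (Habs : Rabs (s - t) = s - t) by (apply Rabs_pos_eq; lra).
      specialize (Hc2 s ltac:(lra) ltac:(rewrite Habs; lra)).
      apply Rabs_def2 in Hc2. fold (dd s) (dd t) in Hc2.
      split; [|lra]. unfold B in *. lra.
Qed.

Lemma coord_le_pnorm p : Rabs (fst p) <= pnorm p /\ Rabs (snd p) <= pnorm p.
Proof.
  split; apply le_of_sq; try apply pnorm_nonneg; rewrite pnorm_sq; unfold dot;
  rewrite <- Rsqr_pow2, <- Rsqr_abs; unfold Rsqr; nra.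
Qed.

Definition gauge_prop N (c : nat -> Pt) (Rr : nat -> R) (Tg : Pt -> Prop) (t : Pt) (g : R) :=
  forall p, pdist p t < 2 * g -> Tg p -> exists i, (i < N)%nat /\ Rr i + g < pdist p (c i).

Lemma gauge_ex N c Rr Tg : closed_plane Tg ->
  (forall p, (forall i, (i < N)%nat -> pdist p (c i) <= Rr i) -> ~ Tg p) ->
  forall t, exists g : posreal, gauge_prop N c Rr Tg t g.
Proof.
  intros Hcl HI t.
  destruct (classic (Tg t)) as [HT|HT].
  - assert (exists i, (i < N)%nat /\ Rr i < pdist t (c i)).
    { apply NNPP; intro Hn. apply (HI t); auto. intros i Hi.
      apply Rnot_lt_le. intro Hlt. apply Hn. exists i; auto. }
    destruct H as [i [Hi Hlt]].
    assert (Hg : 0 < (pdist t (c i) - Rr i) / 4) by lra.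
    exists (mkposreal _ Hg). intros p Hp HTp. exists i. split; auto. simpl in Hp.
    pose proof (pdist_tri t p (c i)). rewrite (pdist_sym t p) in H. simpl. lra.
  - assert (exists eps, 0 < eps /\ forall q, Tg q -> eps <= pdist t q).
    { apply NNPP; intro Hn. apply HT, Hcl. intros eps Heps.
      apply NNPP; intro Hn2. apply Hn. exists eps. split; auto.
      intros q Hq. apply Rnot_lt_le. intro Hlt. apply Hn2. exists q; auto. }
    destruct H as [eps [Heps Hq]].
    assert (Hg : 0 < eps / 2) by lra.
    exists (mkposreal _ Hg). intros p Hp HTp. exfalso. simpl in Hp.
    specialize (Hq p HTp). rewrite pdist_sym in Hq. lra.
Qed.

Lemma separation N (c : nat -> Pt) (Rr : nat -> R) (Tg : Pt -> Prop) :
  (0 < N)%nat -> closed_plane Tg ->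
  (forall p, (forall i, (i < N)%nat -> pdist p (c i) <= Rr i) -> ~ Tg p) ->
  exists delta0, 0 < delta0 /\ forall delta, 0 < delta < delta0 ->
    forall p, (forall i, (i < N)%nat -> pdist p (c i) <= Rr i + delta) -> ~ Tg p.
Proof.
  intros HN Hcl HI.
  pose proof (gauge_ex N c Rr Tg Hcl HI) as Hg.
  set (toPt := fun t : Compactness.Tn 2 R => (fst t, fst (snd t)) : Pt).
  assert (Hf : forall t : Compactness.Tn 2 R, {g : posreal | gauge_prop N c Rr Tg (toPt t) g}).
  { intro t. apply constructive_indefinite_description. apply Hg. }
  set (gf := fun t => proj1_sig (Hf t)).
  set (L := Rabs (Rr 0%nat) + 1).
  set (c0 := c 0%nat).
  set (a := (fst c0 - L, (snd c0 - L, tt)) : Compactness.Tn 2 R).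
  set (b := (fst c0 + L, (snd c0 + L, tt)) : Compactness.Tn 2 R).
  destruct (Compactness.compactness_value 2 a b gf) as [d Hd].
  exists (Rmin d 1). split. { apply Rmin_glb_lt; [apply cond_pos|lra]. }
  intros delta [Hd0 Hd1] p Hp HTp.
  pose proof (Rmin_l d 1). pose proof (Rmin_r d 1).
  set (x := (fst p, (snd p, tt)) : Compactness.Tn 2 R).
  assert (Hbx : Compactness.bounded_n 2 a b x).
  { specialize (Hp 0%nat HN). fold c0 in Hp.
    destruct (coord_le_pnorm (psub p c0)) as [H1 H2].
    unfold pdist in Hp. set (np := pnorm (psub p c0)) in *. unfold psub in H1, H2; cbn [fst snd] in H1, H2.
    pose proof (Rle_abs (Rr 0%nat)).
    pose proof (Rle_abs (fst p - fst c0)). pose proof (Rle_abs (- (fst p - fst c0))).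
    pose proof (Rle_abs (snd p - snd c0)). pose proof (Rle_abs (- (snd p - snd c0))).
    rewrite Rabs_Ropp in *.
    unfold x, a, b; cbn. unfold L. repeat split; lra. }
  apply (Hd x Hbx). intros [t [Hbt [Hct Hdt]]].
  assert (Hc' : Rabs (fst p - fst t) < gf t /\ Rabs (snd p - fst (snd t)) < gf t).
  { destruct t as [t1 [t2 []]]. destruct Hct as [Hc1 [Hc2 _]]. split; [exact Hc1|exact Hc2]. }
  assert (Hpd : pdist p (toPt t) < 2 * gf t).
  { unfold pdist. eapply Rle_lt_trans. apply pnorm_coord_le. unfold psub, toPt; cbn [fst snd]. lra. }
  destruct (proj2_sig (Hf t) p Hpd HTp) as [i [Hi Hlt]].
  specialize (Hp i Hi). fold (gf t) in Hlt. lra.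
Qed.

Lemma uniform_eta N (Q : nat -> R -> Prop) :
  (forall j eta eta', 0 < eta' <= eta -> Q j eta -> Q j eta') ->
  (forall j, (j < N)%nat -> exists eta, 0 < eta /\ Q j eta) ->
  exists eta, 0 < eta /\ forall j, (j < N)%nat -> Q j eta.
Proof.
  intros Hmono. induction N as [|N IH]; intros H.
  - exists 1. split; [lra|]. intros j Hj. inversion Hj.
  - destruct IH as [e1 [He1 H1]]. { intros j Hj. apply H. auto. }
    destruct (H N (Nat.lt_succ_diag_r N)) as [e2 [He2 H2]].
    exists (Rmin e1 e2). split. apply Rmin_glb_lt; auto.
    intros j Hj. destruct (Nat.eq_dec j N) as [->|Hne].
    + eapply Hmono; [|exact H2]. split; [apply Rmin_glb_lt; auto|apply Rmin_r].
    + eapply Hmono; [|apply H1]. split; [apply Rmin_glb_lt; auto|apply Rmin_l]. 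
      assert (j <= N)%nat by (apply Nat.lt_succ_r; auto). 
      destruct (Nat.eq_dec j N); [contradiction|]. apply Nat.le_neq; auto.
Qed.

Lemma in_C_of_state nu delta E0 P0 E P : 0 < nu < 1 ->
  Fv nu delta E0 P0 E P < 0 -> 0 < dv nu delta E0 P0 E P ->
  pdist E (apo_center nu E0 P0) <= apo_radius nu E0 P0 + delta.
Proof.
  intros Hnu HF Hd.
  assert (Hy : pnorm (yv nu E0 P0 E P) < dv nu delta E0 P0 E P).
  { unfold Fv in HF. pose proof (pnorm_nonneg (yv nu E0 P0 E P)).
    set (a := pnorm (yv nu E0 P0 E P)) in *. set (b := dv nu delta E0 P0 E P) in *.
    destruct (Rlt_le_dec a b); auto. nra. }
  assert (Hsplit : psub E (apo_center nu E0 P0) = padd (pscal (betaA nu) (psub P E)) (yv nu E0 P0 E P)).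
  { assert (Hab : alphaA nu - betaA nu = 1).
    { pose proof (al_rel nu Hnu). unfold betaA. lra. }
    apply pt_eq; unfold yv, apo_center, padd, psub, pscal; cbn [fst snd].
    - replace (fst E) with ((alphaA nu - betaA nu) * fst E) at 1 by (rewrite Hab; ring). ring.
    - replace (snd E) with ((alphaA nu - betaA nu) * snd E) at 1 by (rewrite Hab; ring). ring. }
  unfold pdist. rewrite Hsplit. eapply Rle_trans. apply ptri.
  rewrite pnorm_scal, Rabs_pos_eq by (apply Rlt_le, be_pos; auto).
  unfold dv, RCv, apo_radius in Hy.
  assert (pnorm (psub P E) = pnorm (psub E P)) by apply pdist_sym.
  rewrite H.
  assert (betaA nu <= gammaA nu).
  { unfold betaA, gammaA. pose proof (al_pos nu Hnu).
    assert (0 <= nu * alphaA nu * (1 - nu)) by (apply Rmult_le_pos; [apply Rmult_le_pos|]; lra).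
    replace (nu ^ 2 * alphaA nu) with (nu * alphaA nu - nu * alphaA nu * (1 - nu)) by ring. lra. }
  pose proof (pnorm_nonneg (psub E P)).
  assert (betaA nu * pnorm (psub E P) <= gammaA nu * pnorm (psub E P)) by (apply Rmult_le_compat_r; auto).
  unfold apo_radius. lra.
Qed.

Lemma F_lower nu delta E0 P0 E P : 0 < nu < 1 -> 0 < dv nu delta E0 P0 E P ->
  - (RCv nu delta E0 P0) ^ 2 <= Fv nu delta E0 P0 E P.
Proof.
  intros Hnu Hd. unfold Fv.
  assert (dv nu delta E0 P0 E P <= RCv nu delta E0 P0).
  { unfold dv, apo_radius. pose proof (pnorm_nonneg (psub E P)). pose proof (ga_pos nu Hnu).
    assert (0 <= gammaA nu * pnorm (psub E P)) by (apply Rmult_le_pos; lra). lra. }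
  pose proof (pow2_ge_0 (pnorm (yv nu E0 P0 E P))). nra.
Qed.

Lemma nu_i_bounds nuE ui : 0 < nuE -> nuE < ui -> 0 < nuE / ui < 1 /\ nuE / ui * ui = nuE.
Proof.
  intros. split; [split|].
  - apply Rdiv_lt_0_compat; lra.
  - apply (Rmult_lt_reg_r ui); [lra|]. unfold Rdiv. rewrite Rmult_assoc, Rinv_l by lra. lra.
  - field. lra.
Qed.

Lemma inv_i N u nuE delta t0 (xE : R -> Pt) (xP : nat -> R -> Pt) i T :
  0 < nuE -> 0 < delta -> (i < N)%nat -> nuE < u i -> t0 <= T ->
  evader_admissible nuE t0 xE ->
  pursuers_follow N u nuE delta t0 xE xP ->
  (forall s, t0 <= s < T -> forall j, (j < N)%nat -> xP j s <> xE s) ->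
  forall t, t0 <= t <= T ->
    Fv (nuE / u i) delta (xE t0) (xP i t0) (xE t) (xP i t) <=
      - delta ^ 2 / 2 - Mrate (nuE / u i) (u i) delta (xE t0) (xP i t0) / 2 * (t - t0)
    /\ 0 < dv (nuE / u i) delta (xE t0) (xP i t0) (xE t) (xP i t).
Proof.
  intros HnuE Hd Hi Hu HT Hadm Hfol Hnc.
  destruct (nu_i_bounds nuE (u i) HnuE Hu) as [Hnu Hnuu].
  destruct (Hfol i Hi) as [Hcont Hder].
  apply (invariant (nuE / u i) (u i) delta xE (xP i) t0 T Hnu ltac:(lra) Hd HT).
  - unfold Econt. rewrite Hnuu. exact Hadm.
  - exact Hcont.
  - intros t Ht. apply Hder. lra. intros s Hs j Hj. apply Hnc; auto. lra.
  - intros t Ht. apply Hnc; auto.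
Qed.

Lemma capture_exists N u nuE delta t0 (xE : R -> Pt) (xP : nat -> R -> Pt) :
  (0 < N)%nat -> 0 < nuE -> 0 < delta -> (forall i, (i < N)%nat -> nuE < u i) ->
  evader_admissible nuE t0 xE ->
  pursuers_follow N u nuE delta t0 xE xP ->
  exists s, t0 <= s /\ exists j, (j < N)%nat /\ xP j s = xE s.
Proof.
  intros HN HnuE Hd Hu Hadm Hfol.
  apply NNPP; intro Hno.
  assert (Hnc : forall s, t0 <= s -> forall j, (j < N)%nat -> xP j s <> xE s).
  { intros s Hs j Hj Heq. apply Hno. exists s. split; auto. exists j; auto. }
  set (nu := nuE / u 0%nat).
  destruct (nu_i_bounds nuE (u 0%nat) HnuE (Hu 0%nat HN)) as [Hnu _].
  set (M := Mrate nu (u 0%nat) delta (xE t0) (xP 0%nat t0)).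
  set (RC := RCv nu delta (xE t0) (xP 0%nat t0)).
  assert (HM : 0 < M) by (apply Mrate_pos; auto; pose proof (Hu 0%nat HN); lra).
  set (T := t0 + 2 * RC ^ 2 / M + 1).
  assert (HRC2 : 0 <= 2 * RC ^ 2 / M) by (apply Rle_mult_inv_pos; [nra|auto]).
  destruct (inv_i N u nuE delta t0 xE xP 0%nat T HnuE Hd HN (Hu 0%nat HN) ltac:(unfold T; lra)
              Hadm Hfol ltac:(intros s Hs; apply Hnc; lra) T ltac:(unfold T; lra)) as [H1 H2].
  fold nu M in H1. fold nu in H2.
  pose proof (F_lower nu delta (xE t0) (xP 0%nat t0) (xE T) (xP 0%nat T) Hnu H2). fold RC in H.
  assert (M / 2 * (T - t0) = RC ^ 2 + M / 2).
  { unfold T. field. lra. }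
  assert (0 < delta ^ 2) by (apply pow_lt; lra).
  lra.
Qed.

Lemma core N u nuE t0 xE0 xP0 :
  (0 < N)%nat -> 0 < nuE -> (forall i, (i < N)%nat -> nuE < u i) ->
  forall delta, 0 < delta ->
  forall (xE : R -> Pt) (xP : nat -> R -> Pt),
    xE t0 = xE0 -> (forall i, (i < N)%nat -> xP i t0 = xP0 i) ->
    evader_admissible nuE t0 xE ->
    pursuers_follow N u nuE delta t0 xE xP ->
    exists Tc, first_capture N xE xP t0 Tc /\
      forall s, t0 <= s <= Tc -> in_all_C N u nuE delta xE0 xP0 (xE s).
Proof.
  intros HN HnuE Hu delta Hd xE xP HE0 HP0 Hadm Hfol.
  destruct (capture_exists N u nuE delta t0 xE xP HN HnuE Hd Hu Hadm Hfol) as [s0 [Hs0 [j0 [Hj0 Hc0]]]].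
  set (G := fun x => t0 <= x /\ forall s, t0 <= s < x -> forall j, (j < N)%nat -> xP j s <> xE s).
  assert (Hb : bound G).
  { exists s0. intros x [Hx Hx2]. destruct (Rle_dec x s0); auto. exfalso.
    apply (Hx2 s0 ltac:(lra) j0 Hj0 Hc0). }
  assert (Hne : exists x, G x) by (exists t0; split; [lra|intros; lra]).
  destruct (completeness G Hb Hne) as [Tc [Hub Hlub]].
  assert (HT0 : t0 <= Tc) by (apply Hub; split; [lra|intros; lra]).
  assert (Hbefore : forall s, t0 <= s < Tc -> forall j, (j < N)%nat -> xP j s <> xE s).
  { intros s Hs j Hj. apply NNPP; intro Hn. apply NNPP in Hn.
    assert (Tc <= s).
    { apply Hlub. intros x [Hx Hx2]. destruct (Rle_dec x s); auto. exfalso.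
      apply (Hx2 s ltac:(lra) j Hj Hn). }
    lra. }
  assert (Hat : exists i, (i < N)%nat /\ xP i Tc = xE Tc).
  { apply NNPP; intro Hn.
    assert (Hall : forall j, (j < N)%nat -> xP j Tc <> xE Tc).
    { intros j Hj Heq. apply Hn. exists j; auto. }
    assert (Heta : exists eta, 0 < eta /\ forall j, (j < N)%nat ->
              forall s, t0 <= s -> Rabs (s - Tc) < eta -> xP j s <> xE s).
    { apply (uniform_eta N (fun j eta => forall s, t0 <= s -> Rabs (s - Tc) < eta -> xP j s <> xE s)).
      - intros j e e' He Hq s Hs Hst. apply Hq; auto. lra.
      - intros j Hj.
        assert (Hpos : 0 < pdist (xP j Tc) (xE Tc)) by (apply pdist_pos; auto).
        set (q := pdist (xP j Tc) (xE Tc)) in *.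
        destruct (Hfol j Hj) as [Hcont _].
        destruct (Hcont Tc HT0 (q/2) ltac:(lra)) as [e1 [He1 H1]].
        exists (Rmin e1 (q / (2 * nuE + 2))). split.
        { apply Rmin_glb_lt; auto. apply Rdiv_lt_0_compat; lra. }
        intros s Hs Hst Heq.
        pose proof (Rmin_l e1 (q / (2 * nuE + 2))). pose proof (Rmin_r e1 (q / (2 * nuE + 2))).
        specialize (H1 s Hs ltac:(lra)).
        assert (HEs : pdist (xE s) (xE Tc) <= nuE * Rabs (s - Tc)) by (apply Hadm; lra).
        assert (nuE * Rabs (s - Tc) < q / 2).
        { assert (Hq3 : Rabs (s - Tc) < q / (2 * nuE + 2)) by lra.
          apply Rle_lt_trans with ((nuE + 1) * Rabs (s - Tc)). { pose proof (Rabs_pos (s - Tc)). nra. }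
          apply (Rmult_lt_compat_l (nuE + 1)) in Hq3; [|lra].
          replace ((nuE + 1) * (q / (2 * nuE + 2))) with (q / 2) in Hq3 by (field; lra). lra. }
        pose proof (pdist_tri (xP j Tc) (xP j s) (xE Tc)) as T1.
        rewrite Heq in T1, H1. rewrite pdist_sym in H1. fold q in T1. lra. }
    destruct Heta as [eta [Heta Heta2]].
    assert (G (Tc + eta / 2)).
    { split; [lra|]. intros s Hs j Hj. destruct (Rlt_le_dec s Tc).
      - apply Hbefore; auto. lra.
      - apply Heta2; auto. lra. rewrite Rabs_pos_eq; lra. }
    assert (Tc + eta / 2 <= Tc) by (apply Hub; auto). lra. }
  exists Tc. split.
  - split; auto.
  - intros s Hs i Hi.
    destruct (nu_i_bounds nuE (u i) HnuE (Hu i Hi)) as [Hnu _].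
    destruct (inv_i N u nuE delta t0 xE xP i s HnuE Hd Hi (Hu i Hi) ltac:(lra) Hadm Hfol
              ltac:(intros s' Hs'; apply Hbefore; lra) s ltac:(lra)) as [H1 H2].
    rewrite HE0, (HP0 i Hi) in H1, H2.
    unfold in_disc. apply (in_C_of_state _ _ _ _ _ (xP i s) Hnu); auto.
    assert (0 <= Mrate (nuE / u i) (u i) delta xE0 (xP0 i) / 2 * (s - t0)).
    { apply Rmult_le_pos; [|lra]. pose proof (Mrate_pos (nuE / u i) (u i) delta xE0 (xP0 i) Hnu ltac:(pose proof (Hu i Hi); lra) Hd). lra. }
    assert (0 < delta ^ 2) by (apply pow_lt; lra). lra.
Qed.

Theorem mainTheorem8 (N : nat) (u : nat -> R) (nuE t0 : R)
    (xE0 : Pt) (xP0 : nat -> Pt) :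
  (0 < N)%nat ->
  0 < nuE ->
  (forall i, (i < N)%nat -> nuE < u i) ->
  (forall i, (i < N)%nat -> xE0 <> xP0 i) ->
  (* part 1: capture in finite time at a point of the intersection of the C_i *)
  (forall delta, 0 < delta ->
     forall (xE : R -> Pt) (xP : nat -> R -> Pt),
       xE t0 = xE0 -> (forall i, (i < N)%nat -> xP i t0 = xP0 i) ->
       evader_admissible nuE t0 xE ->
       pursuers_follow N u nuE delta t0 xE xP ->
       exists Tc, first_capture N xE xP t0 Tc /\
                  in_all_C N u nuE delta xE0 xP0 (xE Tc)) /\
  (* part 2: target guarding for small delta *)
  (forall Tg : Pt -> Prop, closed_plane Tg ->
     (forall p, in_I N u nuE xE0 xP0 p -> ~ Tg p) ->
     exists delta0, 0 < delta0 /\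
       forall delta, 0 < delta < delta0 ->
       forall (xE : R -> Pt) (xP : nat -> R -> Pt),
         xE t0 = xE0 -> (forall i, (i < N)%nat -> xP i t0 = xP0 i) ->
         evader_admissible nuE t0 xE ->
         pursuers_follow N u nuE delta t0 xE xP ->
         pursuers_win N Tg xE xP t0).
Proof.
  intros HN HnuE Hu Hne. split.
  - intros delta Hd xE xP HE0 HP0 Hadm Hfol.
    destruct (core N u nuE t0 xE0 xP0 HN HnuE Hu delta Hd xE xP HE0 HP0 Hadm Hfol) as [Tc [HTc Hin]].
    exists Tc. split; auto. apply Hin. destruct HTc as [H1 _]. lra.
  - intros Tg Hcl HI.
    destruct (separation N (fun i => apo_center (nuE / u i) xE0 (xP0 i))
                (fun i => apo_radius (nuE / u i) xE0 (xP0 i)) Tg HN Hcl) as [d0 [Hd0 Hsep]].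
    { intros p Hp. apply HI. intros i Hi. apply Hp; auto. }
    exists d0. split; auto.
    intros delta [Hd Hdd] xE xP HE0 HP0 Hadm Hfol.
    destruct (core N u nuE t0 xE0 xP0 HN HnuE Hu delta Hd xE xP HE0 HP0 Hadm Hfol) as [Tc [HTc Hin]].
    exists Tc. split; auto. intros s Hs.
    apply (Hsep delta ltac:(lra)). intros i Hi. apply (Hin s Hs i Hi).
Qed.
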